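(* Let $A$ be a finite set and $v:2^A\to\mathbb{R}_{\ge0}$ a monotone subadditive function with $v(\emptyset)=0$. Let $S_1,\dots,S_N$ enumerate all subsets of $A$ ($N=2^{|A|}$). For each $S\subseteq A$ define $\tilde v(S)$ to be the optimal value of the linear program $$\min \sum_{j=1}^N \alpha_j\, v(S_j)\quad\text{s.t.}\quad \alpha_j\ge 0\ (1\le j\le N),\qquad \sum_{j:\, i\in S_j}\alpha_j\ge 1\ \ \forall i\in S.$$ Then $\tilde v(\cdot)$ is an XOS (fractionally subadditive) function.
   Context: A function $w:2^A\to\mathbb{R}_{\ge 0}$ is XOS (equivalently fractionally subadditive) if for every $S\subseteq A$ and every family of weights $0\le x(T)\le 1$ ($T\subseteq A$) with $\sum_{T:\, i\in T}x(T)\ge 1$ for all $i\in S$, we have $w(S)\le\sum_{T\subseteq A}x(T)\,w(T)$; equivalently, $w$ is the pointwise maximum of finitely many nonnegative additive functions. *)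

(* Defs.v *)
From mathcomp Require Import all_boot all_order all_algebra.
From mathcomp Require Import boolp classical_sets reals.
Set Implicit Arguments. Unset Strict Implicit. Unset Printing Implicit Defensive.
Import Order.TTheory GRing.Theory Num.Theory.
Local Open Scope ring_scope.
Local Open Scope classical_set_scope.

Section Defs.
Variables (R : realType) (A : finType).

Definition set_monotone (v : {set A} -> R) :=
  forall S T : {set A}, S \subset T -> v S <= v T.

Definition set_subadditive (v : {set A} -> R) :=
  forall S T : {set A}, v (S :|: T) <= v S + v T.

Definition lp_feasible (S : {set A}) (alpha : {set A} -> R) :=
  (forall T, 0 <= alpha T) /\
  (forall i, i \in S -> 1 <= \sum_(T : {set A} | i \in T) alpha T).

Definition vtilde (v : {set A} -> R) (S : {set A}) : R :=
  inf [set x | exists alpha, lp_feasible S alpha /\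
                             x = \sum_(T : {set A}) alpha T * v T].

Definition XOS (w : {set A} -> R) :=
  (forall S, 0 <= w S) /\
  forall (S : {set A}) (x : {set A} -> R),
    (forall T, 0 <= x T <= 1) ->
    (forall i, i \in S -> 1 <= \sum_(T : {set A} | i \in T) x T) ->
    w S <= \sum_(T : {set A}) x T * w T.

End Defs.

(* Main.v *)
Require Import Defs.
From mathcomp Require Import all_boot all_order all_algebra.
From mathcomp Require Import boolp classical_sets reals.
Import Order.TTheory GRing.Theory Num.Theory.
Local Open Scope ring_scope.

Section Aux.
Variables (R : realType) (A : finType) (v : {set A} -> R).
Hypothesis v0 : forall S, 0 <= v S.

Definition Eset (S : {set A}) : set R :=
  [set x | exists alpha, lp_feasible S alpha /\
                             x = \sum_(T : {set A}) alpha T * v T].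

Lemma Eset_hasinf S : has_inf (Eset S).
Proof.
split.
  exists (\sum_(T : {set A}) (if T == S then 1 else 0) * v T).
  exists (fun T => if T == S then 1 else 0); split => //; split.
    by move=> T; case: ifP.
  move=> i iS; rewrite (bigD1 S) //= eqxx ler_wpDr //.
  by apply: sumr_ge0 => T _; case: ifP.
exists 0 => y [alpha [[a0 _] ->]].
by apply: sumr_ge0 => T _; apply: mulr_ge0.
Qed.

Lemma vtilde_le S alpha : lp_feasible S alpha ->
  vtilde v S <= \sum_(T : {set A}) alpha T * v T.
Proof.
move=> Hf; have [_ Hlb] := Eset_hasinf S.
by apply: (ge_inf Hlb); exists alpha.
Qed.

Lemma vtilde_ge0 S : 0 <= vtilde v S.
Proof.
have [ne _] := Eset_hasinf S.
apply: (lb_le_inf ne) => y [alpha [[a0 _] ->]].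
by apply: sumr_ge0 => T _; apply: mulr_ge0.
Qed.

Lemma vtilde_approx S e : 0 < e -> exists alpha, lp_feasible S alpha /\
  \sum_(T : {set A}) alpha T * v T < vtilde v S + e.
Proof.
move=> e0; have [y [alpha [Hf ->]] Hy] := inf_adherent e0 (Eset_hasinf S).
by exists alpha.
Qed.

End Aux.

Theorem lemma3p4 (R : realType) (A : finType) (v : {set A} -> R) :
  (forall S, 0 <= v S) ->
  set_monotone v ->
  set_subadditive v ->
  v finset.set0 = 0 ->
  XOS (vtilde v).
Proof.
move=> v0 _ _ _; split; first by move=> S; exact: (@vtilde_ge0 _ _ v v0).
move=> S x x01 xcov.
have x0 : forall T, 0 <= x T by move=> T; case/andP: (x01 T).
set X := \sum_(T : {set A}) x T.
have X0 : 0 <= X by apply: sumr_ge0.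
apply/ler_addgt0Pr => e e0.
set e' := e / (1 + X).
have e'0 : 0 < e' by rewrite divr_gt0 // ltr_wpDr.
have : forall T : {set A}, exists alpha, lp_feasible T alpha /\
  \sum_(U : {set A}) alpha U * v U < vtilde v T + e'.
  by move=> T; apply: (@vtilde_approx _ _ v v0).
case/choice => f Hf.
pose beta U := \sum_(T : {set A}) x T * f T U.
have Hbeta : lp_feasible S beta.
  split.
    move=> U; apply: sumr_ge0 => T _; apply: mulr_ge0 => //.
    by case: (Hf T) => [[+ _] _]; apply.
  move=> i iS; apply: le_trans (xcov i iS) _.
  rewrite /beta exchange_big /=.
  rewrite [X in _ <= X](bigID (fun T : {set A} => i \in T)) /=.
  rewrite ler_wpDr //.
    apply: sumr_ge0 => T _; rewrite -mulr_sumr; apply: mulr_ge0 => //.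
    by apply: sumr_ge0 => U _; case: (Hf T) => [[+ _] _]; apply.
  apply: ler_sum => T iT; rewrite -mulr_sumr -[X in X <= _]mulr1.
  apply: ler_wpM2l => //.
  by case: (Hf T) => [[_ +] _]; apply.
apply: le_trans (@vtilde_le _ _ v v0 _ _ Hbeta) _.
rewrite /beta.
under eq_bigr => U _ do rewrite mulr_suml.
rewrite exchange_big /=.
under eq_bigr => T _ do rewrite -(eq_bigr _ (fun U _ => mulrA _ _ _)) -mulr_sumr.
apply: (@le_trans _ _ (\sum_(T : {set A}) x T * (vtilde v T + e'))).
  apply: ler_sum => T _; apply: ler_wpM2l => //.
  by case: (Hf T) => _ /ltW.
rewrite (eq_bigr (fun T => x T * vtilde v T + x T * e')); last by move=> T _; rewrite mulrDr.
rewrite big_split /= lerD2l -mulr_suml -/X.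
rewrite /e' mulrCA ger_pMr // ler_pdivrMr ?mul1r ?ler_wpDl //.
by rewrite ltr_wpDr.
Qed.
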